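(* The $7$-dimensional nilpotent Lie algebra $(0,0,0,0,12,34,36)$ admits no calibrated $\mathrm{G}_2$-structure; more precisely, for every closed $\phi\in\Lambda^3\mathfrak g^*$ the $2$-form $e_7\lrcorner\,\phi$ lies in the span of $e^{13},e^{23},e^{34},e^{12},e^{36},e^{46}$ and satisfies $(e_7\lrcorner\,\phi)^3=0$.
   Context: Notation: $(a_1,\dots,a_n)$ denotes the Lie algebra having a basis $e^1,\dots,e^n$ of its dual with $de^i=a_i$, where e.g. ''$12$'' stands for $e^{12}=e^1\wedge e^2$; $e_1,\dots,e_n$ is the dual basis of $\mathfrak g$. A $3$-form on a $7$-dimensional Lie algebra defines a $\mathrm{G}_2$-structure if in some basis $f^1,\dots,f^7$ of $\mathfrak g^*$ it equals $f^{127}+f^{347}+f^{567}+f^{135}-f^{236}-f^{146}-f^{245}$; it is calibrated if it is closed under the Chevalley–Eilenberg differential $d$. *)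

(* Defs.v *)
From HB Require Import structures.
From mathcomp Require Import all_boot all_order all_algebra all_fingroup.
Set Implicit Arguments. Unset Strict Implicit. Unset Printing Implicit Defensive.
Import Order.TTheory GRing.Theory Num.Theory.
Local Open Scope ring_scope.

(* The Lie algebra g = R^7 with basis e_1..e_7, vectors are row vectors of
   coordinates; coordinate 1-based index i is stored at column i-1. *)
Notation vec R := 'rV[R]_7.

Definition x {R : realFieldType} (i : nat) (u : vec R) : R := u ord0 (inord i.-1).

Definition ebas {R : realFieldType} (i : nat) : vec R :=
  \row_(k < 7) (if nat_of_ord k == i.-1 then 1 else 0).

Definition e2 {R : realFieldType} (i j : nat) (u v : vec R) : R :=
  x i u * x j v - x j u * x i v.

Definition e3 {R : realFieldType} (i j k : nat) (u v w : vec R) : R :=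
  x i u * (x j v * x k w - x k v * x j w)
  - x i v * (x j u * x k w - x k u * x j w)
  + x i w * (x j u * x k v - x k u * x j v).

(* Lie bracket of (0,0,0,0,12,34,36), with the convention
   de(X,Y) = - e([X,Y]) for 1-forms e, so de^5 = e^{12}, de^6 = e^{34},
   de^7 = e^{36}, and de^1 = ... = de^4 = 0. *)
Definition bracket {R : realFieldType} (u v : vec R) : vec R :=
  \row_(k < 7) (if nat_of_ord k == 4%N then - e2 1 2 u v
                else if nat_of_ord k == 5%N then - e2 3 4 u v
                else if nat_of_ord k == 6%N then - e2 3 6 u v
                else 0).

Definition is_3form {R : realFieldType} (phi : vec R -> vec R -> vec R -> R) : Prop :=
  (forall (a : R) u u' v w, phi (a *: u + u') v w = a * phi u v w + phi u' v w) /\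
  (forall (a : R) u v v' w, phi u (a *: v + v') w = a * phi u v w + phi u v' w) /\
  (forall (a : R) u v w w', phi u v (a *: w + w') = a * phi u v w + phi u v w') /\
  (forall u w, phi u u w = 0) /\ (forall u v, phi u v v = 0) /\ (forall u v, phi u v u = 0).

Definition d3 {R : realFieldType} (phi : vec R -> vec R -> vec R -> R)
  (X0 X1 X2 X3 : vec R) : R :=
    phi (bracket X0 X1) X2 X3 - phi (bracket X0 X2) X1 X3 + phi (bracket X0 X3) X1 X2
  + phi (bracket X1 X2) X0 X3 - phi (bracket X1 X3) X0 X2 + phi (bracket X2 X3) X0 X1.

Definition closed3 {R : realFieldType} (phi : vec R -> vec R -> vec R -> R) : Prop :=
  forall X0 X1 X2 X3, d3 phi X0 X1 X2 X3 = 0.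

Definition phi0 {R : realFieldType} (u v w : vec R) : R :=
  e3 1 2 7 u v w + e3 3 4 7 u v w + e3 5 6 7 u v w + e3 1 3 5 u v w
  - e3 2 3 6 u v w - e3 1 4 6 u v w - e3 2 4 5 u v w.

(* phi is a G2-structure: there is a basis f^1..f^7 of g^* (the columns of an
   invertible matrix P, f^i(u) = (u *m P)_i) in which phi equals phi0. *)
Definition is_G2 {R : realFieldType} (phi : vec R -> vec R -> vec R -> R) : Prop :=
  exists P : 'M[R]_7, P \in unitmx /\
    forall u v w, phi u v w = phi0 (u *m P) (v *m P) (w *m P).

Definition contr7 {R : realFieldType} (phi : vec R -> vec R -> vec R -> R)
  (u v : vec R) : R := phi (ebas 7) u v.

(* omega ^ 3 for a 2-form omega, via the alternation formula; this equals
   8 * (omega /\ omega /\ omega) under the determinant convention, so it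
   vanishes iff omega^3 does. *)
Definition cube2 {R : realFieldType} (om : vec R -> vec R -> R) (X : 'I_6 -> vec R) : R :=
  \sum_(s : 'S_6) (-1) ^+ s *
     (om (X (s (inord 0))) (X (s (inord 1))) *
      om (X (s (inord 2))) (X (s (inord 3))) *
      om (X (s (inord 4))) (X (s (inord 5)))).

Definition in_span_e7 {R : realFieldType} (om : vec R -> vec R -> R) : Prop :=
  exists a1 a2 a3 a4 a5 a6 : R, forall u v,
    om u v = a1 * e2 1 3 u v + a2 * e2 2 3 u v + a3 * e2 3 4 u v
           + a4 * e2 1 2 u v + a5 * e2 3 6 u v + a6 * e2 4 6 u v.

(* Main.v *)
Require Import Defs.
From HB Require Import structures.
From mathcomp Require Import all_boot all_order all_algebra all_fingroup.
From Stdlib Require Import Ring.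
Import GRing.Theory Num.Theory.
Local Open Scope ring_scope.

Section Main.
Variable R : realFieldType.
Definition radd (a b : R) : R := a + b.
Definition rmul (a b : R) : R := a * b.
Definition ropp (a : R) : R := - a.
Definition rsub (a b : R) : R := radd a (ropp b).
Definition rzero : R := 0.
Definition rone : R := 1.
Lemma RT : @ring_theory R rzero rone radd rmul rsub ropp eq.
Proof. rewrite /radd/rmul/rsub/ropp/rzero/rone. split; [exact: add0r|exact: addrC|exact: addrA|exact: mul1r|exact: mulrC|exact: mulrA|exact: mulrDl|by []|exact: subrr]. Qed.
Add Ring RRr : RT.
Lemma raddE (a b : R) : a + b = radd a b. Proof. by []. Qed.
Lemma rmulE (a b : R) : a * b = rmul a b. Proof. by []. Qed.
Lemma roppE (a : R) : - a = ropp a. Proof. by []. Qed.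
Lemma rzeroE : 0 = rzero :> R. Proof. by []. Qed.
Lemma roneE : 1 = rone :> R. Proof. by []. Qed.
Lemma ring_help (x y : R) : radd x rzero = radd y rzero -> x = y.
Proof. by rewrite /radd/rzero !addr0. Qed.
Ltac rng := apply: ring_help; rewrite ?raddE ?rmulE ?roppE ?rzeroE ?roneE; ring.

Lemma xE i j : (0 < i <= 7)%N -> (0 < j)%N -> x i (ebas j : vec R) = if i == j then 1 else 0.
Proof.
move=> /andP[Hi0 Hi] Hj; rewrite /x /ebas mxE inordK; last by rewrite prednK.
by case: i Hi0 Hi => // i; case: j Hj.
Qed.

Definition kap (p q r : 'I_5 * 'I_5) (i : 'I_6) : 'I_5 :=
  match val i with 0 => p.1 | 1 => p.2 | 2 => q.1 | 3 => q.2 | 4 => r.1 | _ => r.2 end.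

Lemma cube_gen (om : vec R -> vec R -> R) (y : vec R -> 'I_5 -> R) (W : 'I_5 -> 'I_5 -> R) :
 (forall u v, om u v = \sum_(p : 'I_5 * 'I_5) W p.1 p.2 * (y u p.1 * y v p.2)) ->
 forall X, cube2 om X = 0.
Proof.
move=> Hom X; rewrite /cube2.
under eq_bigr => s _ do rewrite !Hom.
set Z := fun (s : 'S_6) (i : nat) => X (s (inord i)).
set F := fun (k : nat) (s : 'S_6) (p : 'I_5 * 'I_5) => W p.1 p.2 * (y (Z s k.*2) p.1 * y (Z s k.*2.+1) p.2).
transitivity (\sum_(s : 'S_6) \sum_p \sum_q \sum_r ((-1) ^+ s * (F 0%N s p * F 1%N s q * F 2%N s r))).
  apply: eq_bigr => s _; rewrite !mulr_suml mulr_sumr; apply: eq_bigr => p _.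
  rewrite -mulrA mulr_suml mulr_sumr mulr_sumr; apply: eq_bigr => q _.
  rewrite !mulr_sumr; apply: eq_bigr => r _.
  by rewrite /F /Z /= !mulrA.
rewrite exchange_big; apply: big1 => p _.
rewrite exchange_big; apply: big1 => q _.
rewrite exchange_big; apply: big1 => r _.
pose M := \matrix_(i < 6, j < 6) y (X j) (kap p q r i).
have dM : \det M = 0.
  have : ~~ injectiveb (kap p q r).
    apply/injectiveP => inj; have := leq_card _ inj; by rewrite !card_ord.
  case/injectivePn => i [j] neq eq.
  apply: (determinant_alternate neq) => k; by rewrite !mxE eq.
transitivity (W p.1 p.2 * W q.1 q.2 * W r.1 r.2 * \det M); last by rewrite dM mulr0.
rewrite /determinant mulr_sumr.
apply: eq_bigr => s _.
have e0 : (inord 0 : 'I_6) = ord0 by apply: val_inj; rewrite /= inordK.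
have e1 : (inord 1 : 'I_6) = lift ord0 ord0 by apply: val_inj; rewrite /= inordK.
have e2 : (inord 2 : 'I_6) = lift ord0 (lift ord0 ord0) by apply: val_inj; rewrite /= inordK.
have e3 : (inord 3 : 'I_6) = lift ord0 (lift ord0 (lift ord0 ord0)) by apply: val_inj; rewrite /= inordK.
have e4 : (inord 4 : 'I_6) = lift ord0 (lift ord0 (lift ord0 (lift ord0 ord0))) by apply: val_inj; rewrite /= inordK.
have e5 : (inord 5 : 'I_6) = lift ord0 (lift ord0 (lift ord0 (lift ord0 (lift ord0 ord0)))) by apply: val_inj; rewrite /= inordK.
rewrite !big_ord_recl big_ord0 !mxE /F /Z /= e0 e1 e2 e3 e4 e5.
rewrite /kap /=; rng.
Qed.

Lemma xOrd (i : 'I_7) (u : vec R) : x i.+1 u = u ord0 i.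
Proof. by rewrite /x /= inord_val. Qed.
Lemma xO n (Hn : (n < 7)%N) (u : vec R) : x n.+1 u = u ord0 (Ordinal Hn).
Proof. exact: (xOrd (Ordinal Hn)). Qed.

Lemma decomp (u : vec R) : u = x 1 u *: ebas 1 + (x 2 u *: ebas 2 + (x 3 u *: ebas 3 +
  (x 4 u *: ebas 4 + (x 5 u *: ebas 5 + (x 6 u *: ebas 6 + x 7 u *: ebas 7))))).
Proof. apply/rowP => k; rewrite !mxE.
by case: k => [[|[|[|[|[|[|[|k]]]]]]] Hk] //=; rewrite -(xO _ Hk); rng. Qed.

Lemma sos (s : seq R) : \sum_(t <- s) t ^+ 2 = 0 -> forall t, t \in s -> t = 0.
Proof.
move=> /eqP; rewrite psumr_eq0 => [/allP H t /H|t _]; last exact: sqr_ge0.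
by rewrite sqrf_eq0 => /eqP.
Qed.

Section Phi.
Variable phi : vec R -> vec R -> vec R -> R.
Hypothesis Hphi : is_3form phi.

Lemma L1 a u u' v w : phi (a *: u + u') v w = a * phi u v w + phi u' v w.
Proof. by case: Hphi. Qed.
Lemma L2 a u v v' w : phi u (a *: v + v') w = a * phi u v w + phi u v' w.
Proof. by case: Hphi => _ []. Qed.
Lemma L3 a u v w w' : phi u v (a *: w + w') = a * phi u v w + phi u v w'.
Proof. by case: Hphi => _ [] _ []. Qed.
Lemma A1 u w : phi u u w = 0. Proof. by case: Hphi => _ [] _ [] _ []. Qed.
Lemma A2 u v : phi u v v = 0. Proof. by case: Hphi => _ [] _ [] _ [] _ []. Qed.
Lemma A3 u v : phi u v u = 0. Proof. by case: Hphi => _ [] _ [] _ [] _ [] _. Qed.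

Lemma Z1 v w : phi 0 v w = 0.
Proof. have h := L1 1 0 0 v w. rewrite scaler0 addr0 in h.
have -> : phi 0 v w = (1 * phi 0 v w + phi 0 v w) - phi 0 v w by rng.
by rewrite -h subrr. Qed.
Lemma Z2 u w : phi u 0 w = 0.
Proof. have h := L2 1 u 0 0 w. rewrite scaler0 addr0 in h.
have -> : phi u 0 w = (1 * phi u 0 w + phi u 0 w) - phi u 0 w by rng.
by rewrite -h subrr. Qed.
Lemma Z3 u v : phi u v 0 = 0.
Proof. have h := L3 1 u v 0 0. rewrite scaler0 addr0 in h.
have -> : phi u v 0 = (1 * phi u v 0 + phi u v 0) - phi u v 0 by rng.
by rewrite -h subrr. Qed.
Lemma S1 a u v w : phi (a *: u) v w = a * phi u v w.
Proof. by have := L1 a u 0 v w; rewrite addr0 Z1 addr0. Qed.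
Lemma S2 a u v w : phi u (a *: v) w = a * phi u v w.
Proof. by have := L2 a u v 0 w; rewrite addr0 Z2 addr0. Qed.
Lemma S3 a u v w : phi u v (a *: w) = a * phi u v w.
Proof. by have := L3 a u v w 0; rewrite addr0 Z3 addr0. Qed.
Lemma D1 u u' v w : phi (u + u') v w = phi u v w + phi u' v w.
Proof. by have := L1 1 u u' v w; rewrite scale1r mul1r. Qed.
Lemma D2 u v v' w : phi u (v + v') w = phi u v w + phi u v' w.
Proof. by have := L2 1 u v v' w; rewrite scale1r mul1r. Qed.
Lemma D3 u v w w' : phi u v (w + w') = phi u v w + phi u v w'.
Proof. by have := L3 1 u v w w'; rewrite scale1r mul1r. Qed.
Lemma sw12 u v w : phi v u w = - phi u v w.
Proof. have := A1 (u + v) w. rewrite !D1 !D2 !A1 add0r addr0 => h.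
by apply/eqP; rewrite -addr_eq0 addrC h. Qed.
Lemma sw23 u v w : phi u w v = - phi u v w.
Proof. have := A2 u (v + w). rewrite !D2 !D3 !A2 add0r addr0 => h.
by apply/eqP; rewrite -addr_eq0 addrC h. Qed.
Lemma sw13 u v w : phi w v u = - phi u v w.
Proof. have := A3 (u + w) v. rewrite !D1 !D3 !A3 add0r addr0 => h.
by apply/eqP; rewrite -addr_eq0 addrC h. Qed.

Lemma bracketE (u v : vec R) : bracket u v =
  (- e2 1 2 u v) *: ebas 5 + ((- e2 3 4 u v) *: ebas 6 + (- e2 3 6 u v) *: ebas 7).
Proof.
apply/rowP => k; rewrite !mxE.
by case: k => [[|[|[|[|[|[|[|k]]]]]]] Hk] //=; rng.
Qed.

Lemma phi_br u v y z : phi (bracket u v) y z =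
  - e2 1 2 u v * phi (ebas 5) y z - e2 3 4 u v * phi (ebas 6) y z - e2 3 6 u v * phi (ebas 7) y z.
Proof. rewrite bracketE !D1 !S1; rng. Qed.

Hypothesis Hcl : closed3 phi.

Ltac ev := rewrite /d3 !phi_br /e2 !xE //= ?A1 ?A2 ?A3.
Definition c j l := phi (ebas 7) (ebas j) (ebas l).

Lemma finP (E t : R) : E = 0 -> t = E -> t = 0. Proof. by move=> -> ->. Qed.
Lemma finN (E t : R) : E = 0 -> t = - E -> t = 0. Proof. by move=> -> ->; rewrite oppr0. Qed.
Lemma c14 : phi (ebas 7) (ebas 1) (ebas 4) = 0.
Proof. have := Hcl (ebas 3) (ebas 6) (ebas 1) (ebas 4). ev. move=> h. first [apply: (finP _ _ h); rng | apply: (finN _ _ h); rng]. Qed.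
Lemma c24 : phi (ebas 7) (ebas 2) (ebas 4) = 0.
Proof. have := Hcl (ebas 3) (ebas 6) (ebas 2) (ebas 4). ev. move=> h. first [apply: (finP _ _ h); rng | apply: (finN _ _ h); rng]. Qed.
Lemma c16 : phi (ebas 7) (ebas 1) (ebas 6) = 0.
Proof. have := Hcl (ebas 3) (ebas 4) (ebas 1) (ebas 7). ev. move=> h. rewrite (sw13 (ebas 7) (ebas 1) (ebas 6)) in h. first [apply: (finP _ _ h); rng | apply: (finN _ _ h); rng]. Qed.
Lemma c26 : phi (ebas 7) (ebas 2) (ebas 6) = 0.
Proof. have := Hcl (ebas 3) (ebas 4) (ebas 2) (ebas 7). ev. move=> h. rewrite (sw13 (ebas 7) (ebas 2) (ebas 6)) in h. first [apply: (finP _ _ h); rng | apply: (finN _ _ h); rng]. Qed.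
Lemma c51 : phi (ebas 7) (ebas 5) (ebas 1) = 0.
Proof. have := Hcl (ebas 3) (ebas 6) (ebas 5) (ebas 1). ev. move=> h. first [apply: (finP _ _ h); rng | apply: (finN _ _ h); rng]. Qed.
Lemma c52 : phi (ebas 7) (ebas 5) (ebas 2) = 0.
Proof. have := Hcl (ebas 3) (ebas 6) (ebas 5) (ebas 2). ev. move=> h. first [apply: (finP _ _ h); rng | apply: (finN _ _ h); rng]. Qed.
Lemma c54 : phi (ebas 7) (ebas 5) (ebas 4) = 0.
Proof. have := Hcl (ebas 3) (ebas 6) (ebas 5) (ebas 4). ev. move=> h. first [apply: (finP _ _ h); rng | apply: (finN _ _ h); rng]. Qed.
Lemma c53 : phi (ebas 7) (ebas 5) (ebas 3) = 0.
Proof. have := Hcl (ebas 1) (ebas 2) (ebas 7) (ebas 3). ev. move=> h. rewrite (sw12 (ebas 7) (ebas 5) (ebas 3)) in h. first [apply: (finP _ _ h); rng | apply: (finN _ _ h); rng]. Qed.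
Lemma c56 : phi (ebas 7) (ebas 5) (ebas 6) = 0.
Proof. have := Hcl (ebas 1) (ebas 2) (ebas 7) (ebas 6). ev. move=> h. rewrite (sw12 (ebas 7) (ebas 5) (ebas 6)) in h. first [apply: (finP _ _ h); rng | apply: (finN _ _ h); rng]. Qed.

Lemma c15 : phi (ebas 7) (ebas 1) (ebas 5) = 0. Proof. by rewrite sw23 c51 oppr0. Qed.
Lemma c25 : phi (ebas 7) (ebas 2) (ebas 5) = 0. Proof. by rewrite sw23 c52 oppr0. Qed.
Lemma c35 : phi (ebas 7) (ebas 3) (ebas 5) = 0. Proof. by rewrite sw23 c53 oppr0. Qed.
Lemma c45 : phi (ebas 7) (ebas 4) (ebas 5) = 0. Proof. by rewrite sw23 c54 oppr0. Qed.

Lemma span_c u v : contr7 phi u v = c 1 3 * e2 1 3 u v + c 2 3 * e2 2 3 u v + c 3 4 * e2 3 4 u v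
   + c 1 2 * e2 1 2 u v + c 3 6 * e2 3 6 u v + c 4 6 * e2 4 6 u v.
Proof.
rewrite /contr7 {1}(decomp u) {1}(decomp v) !D2 !S2 !D3 !S3 ?A1 ?A2 ?A3.
rewrite (sw23 (ebas 7) (ebas 1) (ebas 2)) (sw23 (ebas 7) (ebas 1) (ebas 3)) (sw23 (ebas 7) (ebas 2) (ebas 3)) (sw23 (ebas 7) (ebas 1) (ebas 4)) (sw23 (ebas 7) (ebas 2) (ebas 4)) (sw23 (ebas 7) (ebas 3) (ebas 4)) (sw23 (ebas 7) (ebas 1) (ebas 5)) (sw23 (ebas 7) (ebas 2) (ebas 5)) (sw23 (ebas 7) (ebas 3) (ebas 5)) (sw23 (ebas 7) (ebas 4) (ebas 5)) (sw23 (ebas 7) (ebas 1) (ebas 6)) (sw23 (ebas 7) (ebas 2) (ebas 6)) (sw23 (ebas 7) (ebas 3) (ebas 6)) (sw23 (ebas 7) (ebas 4) (ebas 6)) (sw23 (ebas 7) (ebas 5) (ebas 6)).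
rewrite c14 c24 c16 c26 c15 c25 c35 c45 c56 /c /e2. rng.
Qed.
End Phi.

Definition Wf (phi : vec R -> vec R -> vec R -> R) (k l : 'I_5) : R :=
  match nat_of_ord k, nat_of_ord l with
  | 0, 2 => c phi 1 3 | 1, 2 => c phi 2 3 | 2, 3 => c phi 3 4
  | 0, 1 => c phi 1 2 | 2, 4 => c phi 3 6 | 3, 4 => c phi 4 6
  | 2, 0 => - c phi 1 3 | 2, 1 => - c phi 2 3 | 3, 2 => - c phi 3 4
  | 1, 0 => - c phi 1 2 | 4, 2 => - c phi 3 6 | 4, 3 => - c phi 4 6 | _, _ => 0 end.

Lemma part2 phi : is_3form phi -> closed3 phi ->
  in_span_e7 (contr7 phi) /\ (forall X : 'I_6 -> vec R, cube2 (contr7 phi) X = 0).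
Proof.
move=> Hphi Hcl; split.
  exists (c phi 1 3), (c phi 2 3), (c phi 3 4), (c phi 1 2), (c phi 3 6), (c phi 4 6).
  exact: span_c.
apply: (@cube_gen _ (fun u k => x (nth 0%N [:: 1; 2; 3; 4; 6]%N k) u) (Wf phi)).
move=> u v; rewrite (span_c _ Hphi Hcl).
transitivity (\sum_(i < 5) \sum_(j < 5) Wf phi i j *
   (x (nth 0%N [:: 1; 2; 3; 4; 6]%N i) u * x (nth 0%N [:: 1; 2; 3; 4; 6]%N j) v)); last first.
  by rewrite pair_bigA.
rewrite !big_ord_recl !big_ord0 /Wf /= /e2; rng.
Qed.

Lemma cross0 (a b : vec R) (k : 'I_7) : (forall j : 'I_7, a 0 k * b 0 j = a 0 j * b 0 k) ->
  b 0 k *: a - a 0 k *: b = 0.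
Proof. move=> H; apply/rowP => j; by rewrite !mxE H mulrC subrr. Qed.

Lemma coord5 (a b : R) : (b *: ebas 7 - a *: ebas 5 : vec R) = 0 -> a = 0.
Proof.
move=> /rowP/(_ (inord 4)); rewrite !mxE inordK //= => h.
by apply: (finN _ _ h); rng.
Qed.

Lemma e7nz : (ebas 7 : vec R) != 0.
Proof. apply/eqP => /rowP/(_ (inord 6)); rewrite !mxE inordK //=; apply/eqP; exact: oner_neq0. Qed.


Lemma lagr (w z : vec R) : \sum_(t <- [:: x 1 w * x 2 z - x 2 w * x 1 z; x 1 w * x 3 z - x 3 w * x 1 z; x 1 w * x 4 z - x 4 w * x 1 z; x 1 w * x 5 z - x 5 w * x 1 z; x 1 w * x 6 z - x 6 w * x 1 z; x 1 w * x 7 z - x 7 w * x 1 z; x 2 w * x 3 z - x 3 w * x 2 z; x 2 w * x 4 z - x 4 w * x 2 z; x 2 w * x 5 z - x 5 w * x 2 z; x 2 w * x 6 z - x 6 w * x 2 z; x 2 w * x 7 z - x 7 w * x 2 z; x 3 w * x 4 z - x 4 w * x 3 z; x 3 w * x 5 z - x 5 w * x 3 z; x 3 w * x 6 z - x 6 w * x 3 z; x 3 w * x 7 z - x 7 w * x 3 z; x 4 w * x 5 z - x 5 w * x 4 z; x 4 w * x 6 z - x 6 w * x 4 z; x 4 w * x 7 z - x 7 w * x 4 z; x 5 w * x 6 z - x 6 w * x 5 z; x 5 w * x 7 z - x 7 w * x 5 z; x 6 w * x 7 z - x 7 w * x 6 z]) t ^+ 2 = phi0 w z (ebas 1) ^+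 2 + phi0 w z (ebas 2) ^+ 2 + phi0 w z (ebas 3) ^+ 2 + phi0 w z (ebas 4) ^+ 2 + phi0 w z (ebas 5) ^+ 2 + phi0 w z (ebas 6) ^+ 2 + phi0 w z (ebas 7) ^+ 2.
Proof. rewrite !big_cons big_nil /phi0 /e3 !xE //= !expr2; rng. Qed.

Lemma cross_lemma (w z : vec R) : (forall k, phi0 w z (ebas k) = 0) ->
  forall i j : 'I_7, x i.+1 w * x j.+1 z = x j.+1 w * x i.+1 z.
Proof.
move=> C.
have SOS : \sum_(t <- [:: x 1 w * x 2 z - x 2 w * x 1 z; x 1 w * x 3 z - x 3 w * x 1 z; x 1 w * x 4 z - x 4 w * x 1 z; x 1 w * x 5 z - x 5 w * x 1 z; x 1 w * x 6 z - x 6 w * x 1 z; x 1 w * x 7 z - x 7 w * x 1 z; x 2 w * x 3 z - x 3 w * x 2 z; x 2 w * x 4 z - x 4 w * x 2 z; x 2 w * x 5 z - x 5 w * x 2 z; x 2 w * x 6 z - x 6 w * x 2 z; x 2 w * x 7 z - x 7 w * x 2 z; x 3 w * x 4 z - x 4 w * x 3 z; x 3 w * x 5 z - x 5 w * x 3 z; x 3 w * x 6 z - x 6 w * x 3 z; x 3 w * x 7 z - x 7 w * x 3 z; x 4 w * x 5 z - x 5 w * x 4 z; x 4 w * x 6 z - x 6 w * x 4 z; x 4 w * x 7 z - x 7 w * x 4 z; x 5 w * x 6 z - x 6 w * x 5 z; x 5 w * x 7 z - x 7 w * x 5 z; x 6 w * x 7 z - x 7 w * x 6 z]) t ^+ 2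 = 0.
  by rewrite lagr !C expr2 mulr0 !addr0.
have Hm := sos _ SOS.
move=> [i Hi] [j Hj] /=.
do 7?[case: i Hi => [|i] Hi]; do 7?[case: j Hj => [|j] Hj] => //;
first [ (apply/eqP; rewrite -subr_eq0; apply/eqP; apply: Hm; by rewrite !inE eqxx ?orTb ?orbT)
      | (apply/esym/eqP; rewrite -subr_eq0; apply/eqP; apply: Hm; by rewrite !inE eqxx ?orTb ?orbT) ].
Qed.

Lemma part1 (phi : vec R -> vec R -> vec R -> R) : is_3form phi -> closed3 phi -> ~ is_G2 phi.
Proof.
move=> Hphi Hcl [P [HP H0]].
have K y : phi (ebas 7) (ebas 5) y = 0.
  have := span_c _ Hphi Hcl (ebas 5) y; rewrite /contr7 /e2 !xE //= => ->; rng.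
have C k : phi0 (ebas 7 *m P) (ebas 5 *m P) (ebas k) = 0.
  by rewrite -[ebas k](mulmxKV HP) -H0 K.
have M := cross_lemma _ _ C.
have W0 k : (ebas 7 *m P) 0 k = 0.
  apply: (@coord5 _ ((ebas 5 *m P) 0 k)).
  rewrite -[LHS](mulmxK HP) mulmxBl -!scalemxAl cross0 ?mul0mx // => j.
  rewrite -!xOrd; exact: M.
have : ebas 7 *m P = 0 by apply/rowP => k; rewrite W0 mxE.
move/(congr1 (fun m => m *m invmx P)); rewrite mulmxK // mul0mx => e.
by move: e7nz; rewrite e eqxx.
Qed.
End Main.

Theorem mainTheorem8 (R : realFieldType) :
  (forall phi : vec R -> vec R -> vec R -> R,
     is_3form phi -> closed3 phi -> ~ is_G2 phi) /\
  (forall phi : vec R -> vec R -> vec R -> R,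
     is_3form phi -> closed3 phi ->
     in_span_e7 (contr7 phi) /\ (forall X : 'I_6 -> vec R, cube2 (contr7 phi) X = 0)).
Proof. split; [exact: part1 | exact: part2]. Qed.
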